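(* Let $\bm G\in\{0,1\}^{n\times k}$ be a partition indicator matrix, $\bm\Omega\in[0,1]^{k\times k}$ symmetric, $\bm{\mathcal A}=\bm G\bm\Omega\bm G^\top$ of rank $k$ with all entries of $\bm{\mathcal A}\bm1$ positive, and $\bm{\mathcal L}=\operatorname{diag}(\bm{\mathcal A}\bm1)^{-1/2}\bm{\mathcal A}\operatorname{diag}(\bm{\mathcal A}\bm1)^{-1/2}$. Let $\bm v_1,\ldots,\bm v_k$ be orthonormal eigenvectors of $\bm{\mathcal L}$ corresponding to its $k$ nonzero eigenvalues. Then each column of $\bm G$ is a linear combination of $\bm v_1,\ldots,\bm v_k$.
   Context: A partition indicator matrix $\bm G$ has exactly one entry $1$ in each row and each column nonzero. $\bm1$ is the all-ones vector and $\operatorname{diag}(\bm x)$ the diagonal matrix with diagonal $\bm x$. *)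

(* Defs.v *)
From HB Require Import structures.
From mathcomp Require Import all_boot all_order all_algebra.
Set Implicit Arguments. Unset Strict Implicit. Unset Printing Implicit Defensive.
Import Order.TTheory GRing.Theory Num.Theory.
Local Open Scope ring_scope.

Definition partition_indicator (R : nzRingType) (n k : nat) (G : 'M[R]_(n, k)) : Prop :=
  (forall i j, G i j = 0 \/ G i j = 1) /\
  (forall i, exists! j, G i j = 1) /\
  (forall j, exists i, G i j != 0).

Definition degvec (R : nzRingType) (n : nat) (A : 'M[R]_n) : 'cV[R]_n :=
  A *m const_mx 1.

Definition normalized_adj (R : rcfType) (n : nat) (A : 'M[R]_n) : 'M[R]_n :=
  let D := diag_mx (\row_i (Num.sqrt (degvec A i ord0))^-1) in
  D *m A *m D.

(* Main.v *)
Require Import Defs.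
From HB Require Import structures.
From mathcomp Require Import all_boot all_order all_algebra.
Import Order.TTheory GRing.Theory Num.Theory.
Local Open Scope ring_scope.

Theorem corollaryA3 (R : rcfType) (n k : nat)
  (G : 'M[R]_(n, k)) (Omega : 'M[R]_k) (V : 'M[R]_(n, k)) (lam : 'rV[R]_k) :
  partition_indicator G ->
  (forall a b, 0 <= Omega a b <= 1) ->
  Omega^T = Omega ->
  \rank (G *m Omega *m G^T) = k ->
  (forall i, 0 < degvec (G *m Omega *m G^T) i ord0) ->
  (* the columns of V are orthonormal *)
  V^T *m V = 1%:M ->
  (* column j of V is an eigenvector of L for the nonzero eigenvalue lam j *)
  (forall j, lam ord0 j != 0 /\
     normalized_adj (G *m Omega *m G^T) *m col j V = lam ord0 j *: col j V) ->
  forall j : 'I_k, exists c : 'cV[R]_k, col j G = V *m c.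
Proof.
move=> [G01 [Guniq Gnz]] _ _ _ degpos VV eig j0.
set A := G *m Omega *m G^T.
set D := diag_mx (\row_i (Num.sqrt (degvec A i ord0))^-1).
set w := Omega *m G^T *m const_mx (1 : R) : 'cV[R]_k.
have degE : forall i j, G i j = 1 -> degvec A i ord0 = w j ord0.
  move=> i j Gij.
  rewrite /degvec /A /w -!mulmxA mxE (bigD1 j) //= Gij mul1r big1 ?addr0 //.
  move=> m Hm; have [->|H1] := G01 i m; first by rewrite mul0r.
  have [j' [_ U]] := Guniq i.
  by move: Hm; rewrite -(U _ H1) -(U _ Gij) eqxx.
have wpos : forall j, 0 < w j ord0.
  move=> j; have [i Hi] := Gnz j.
  have [H0|H1] := G01 i j; first by rewrite H0 eqxx in Hi.
  by rewrite -(degE _ _ H1).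
set E := diag_mx (\row_j Num.sqrt (w j ord0)).
have GT : G^T = E *m (G^T *m D).
  apply/matrixP=> a b; rewrite mul_diag_mx mul_mx_diag !mxE.
  have [->|H1] := G01 b a; first by rewrite mul0r mulr0.
  have := degE _ _ H1; have := wpos a; rewrite /degvec /w.
  move=> wp de; rewrite mxE in wp; rewrite !mxE in de; rewrite de.
  rewrite H1 mul1r mulfV //.
  by rewrite gt_eqF // sqrtr_gt0.
have s1 : (G^T <= G^T *m D)%MS by rewrite {1}GT submxMl.
set L := normalized_adj A.
set X := \matrix_(a, b) (V a b / lam ord0 b).
have VLX : V = L *m X.
  apply/matrixP=> a b.
  have [nz eq] := eig b.
  have := congr1 (fun M : 'cV_n => M a ord0) eq.
  rewrite !mxE -/A -/L => e.
  transitivity ((\sum_j L a j * col b V j ord0) / lam ord0 b).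
    by rewrite e mulrC mulrA mulVf // mul1r.
  rewrite mulr_suml; apply: eq_bigr => m _; by rewrite !mxE mulrA.
have LT : L^T = (D *m G *m Omega^T) *m (G^T *m D).
  rewrite /L /normalized_adj -/D /A !trmx_mul !tr_diag_mx trmxK.
  by rewrite !mulmxA.
have s2 : (V^T <= G^T *m D)%MS.
  rewrite VLX trmx_mul; apply: submx_trans (submxMl _ _) _.
  by rewrite LT submxMl.
have rV : \rank V^T = k.
  apply/eqP; rewrite eqn_leq rank_leq_row /=.
  by rewrite -{1}(mxrank1 R k) -VV mxrankM_maxl.
have s3 : (G^T *m D <= V^T)%MS.
  by rewrite -(geq_leqif (mxrank_leqif_sup s2)) rV rank_leq_row.
have [C HC] := submxP (submx_trans s1 s3).
exists (col j0 C^T).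
by rewrite -[G]trmxK HC trmx_mul trmxK !colE mulmxA.
Qed.
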